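(* Suppose the jobs are indexed so that $d_1\le d_2\le\dots\le d_n$. Let $\sigma$ be a proper schedule and $\sigma'$ the intermediate schedule obtained from $\sigma$ by an admissible swap at some step $j^*$ between machines $M_h$ and $M_i$. Then $L_{\max}(\sigma')\le L_{\max}(\sigma)$, where $L_{\max}(\tau)=\max_{j\in J}(C_j(\tau)-d_j)$.
   Context: Jobs $J=\{1,\dots,n\}$, job $j$ with positive integer processing time $p_j$ and integer due date $d_j$, are scheduled non-preemptively on $m$ identical machines $M_1,\dots,M_m$; $p_{\max}=\max_j p_j$, $P(X)=\sum_{j\in X}p_j$. A proper schedule $\sigma$ is a partition $J=J_1(\sigma)\cup\dots\cup J_m(\sigma)$, the jobs of $J_i(\sigma)$ processed on $M_i$ consecutively from time $0$ without idle time in increasing index order; $C_j(\sigma)$ is the completion time of $j$. $J_j=\{1,\dots,j\}$, $J_{i,j}(\sigma)=J_i(\sigma)\cap J_j$, $\Delta_{h,i,j}(\sigma)=P(J_{h,j}(\sigma))-P(J_{i,j}(\sigma))$. The swap: admissible for proper $\sigma$ at step $j^*$ with machines $M_h,M_i$ if $j^*\in J_h(\sigma)$, $|J_i(\sigma)\setminus J_{i,j^*}(\sigma)|\ge 2p_{\max}$, and $\Delta_{h,i,j^*}(\sigma)\ge 4p_{\max}^2$. Let $J_I$ be the first (smallest-index) $2p_{\max}$ jobs of $J_i(\sigma)\setminus J_{i,j^*}(\sigma)$ and $J_H$ the last (largest-index) $2p_{\max}$ jobs of $J_{h,j^*}(\sigma)$; choose non-empty $J_{H'}\subseteq J_H$,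 $J_{I'}\subseteq J_I$ with $P(J_{H'})=P(J_{I'})$. The intermediate schedule $\sigma'$: on $M_h$ the time interval occupied by $J_H$ in $\sigma$ is filled by $J_H\setminus J_{H'}$ then $J_{I'}$; on $M_i$ the interval occupied by $J_I$ is filled by $J_{H'}$ then $J_I\setminus J_{I'}$ (each group in its order in $\sigma$); all other jobs keep their positions. *)

(* Defs.v *)
(* Jobs are 'I_n (job j of the paper is the ordinal j-1, so
   the index order is preserved); machines are 'I_m. *)
From mathcomp Require Import all_boot all_order all_algebra.
Set Implicit Arguments. Unset Strict Implicit. Unset Printing Implicit Defensive.
Import Order.TTheory GRing.Theory Num.Theory.

Section Sched.
Variables (n m : nat) (p : 'I_n -> nat).

Definition pmax : nat := \max_(j < n) p j.
Definition Pset (X : {set 'I_n}) : nat := \sum_(j in X) p j.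
Definition Pseq (s : seq 'I_n) : nat := \sum_(j <- s) p j.

(* A general (not necessarily proper) schedule: for each machine, the sequence
   of jobs it processes consecutively from time 0 without idle time. *)
Definition ctime (s : 'I_m -> seq 'I_n) (j : 'I_n) : nat :=
  \sum_(i < m | j \in s i) Pseq (take (index j (s i)).+1 (s i)).

(* max of a nonempty list of integers (0 for the empty list, irrelevant) *)
Definition seqmax (s : seq int) : int :=
  if s is x :: s' then foldl Num.max x s' else 0%R.

Definition Lmax (d : 'I_n -> int) (s : 'I_m -> seq 'I_n) : int :=
  seqmax [seq ((ctime s j)%:Z - d j)%R | j <- enum 'I_n].

(* A proper schedule is given by the partition J = J_1 u ... u J_m,
   encoded by the machine assignment a : 'I_n -> 'I_m. *)
Definition Jm (a : 'I_n -> 'I_m) (i : 'I_m) : {set 'I_n} := [set j | a j == i].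
Definition Jij (a : 'I_n -> 'I_m) (i : 'I_m) (j : 'I_n) : {set 'I_n} :=
  [set k | (a k == i) && (k <= j)].
(* the proper schedule as machine sequences: increasing index order *)
Definition proper_seq (a : 'I_n -> 'I_m) (i : 'I_m) : seq 'I_n := enum (Jm a i).

Definition Delta (a : 'I_n -> 'I_m) (h i : 'I_m) (j : 'I_n) : int :=
  ((Pset (Jij a h j))%:Z - (Pset (Jij a i j))%:Z)%R.

Definition Jafter (a : 'I_n -> 'I_m) (i : 'I_m) (js : 'I_n) : {set 'I_n} :=
  [set k | (a k == i) && (js < k)].

Definition admissible (a : 'I_n -> 'I_m) (js : 'I_n) (h i : 'I_m) : Prop :=
  [/\ a js = h,
      2 * pmax <= #|Jafter a i js| &
      ((4 * pmax ^ 2)%:Z <= Delta a h i js)%R].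

Definition JI (a : 'I_n -> 'I_m) (js : 'I_n) (i : 'I_m) : seq 'I_n :=
  take (2 * pmax) (enum (Jafter a i js)).
Definition JH (a : 'I_n -> 'I_m) (js : 'I_n) (h : 'I_m) : seq 'I_n :=
  let s := enum (Jij a h js) in drop (size s - 2 * pmax) s.

Definition intermediate (a : 'I_n -> 'I_m) (js : 'I_n) (h i : 'I_m)
    (H' I' : {set 'I_n}) (k : 'I_m) : seq 'I_n :=
  let sh := proper_seq a h in
  let si := proper_seq a i in
  let jH := JH a js h in
  let jI := JI a js i in
  if k == h then
    [seq j : 'I_n <- sh | (j <= js) && (j \notin jH)]
    ++ [seq j : 'I_n <- jH | j \notin H'] ++ [seq j : 'I_n <- jI | j \in I']
    ++ [seq j : 'I_n <- sh | js < j]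
  else if k == i then
    [seq j : 'I_n <- si | j <= js]
    ++ [seq j : 'I_n <- jH | j \in H'] ++ [seq j : 'I_n <- jI | j \notin I']
    ++ [seq j : 'I_n <- si | (js < j) && (j \notin jI)]
  else proper_seq a k.

End Sched.

(* Main.v *)
Require Import Defs.
From mathcomp Require Import all_boot all_order all_algebra.
From mathcomp Require Import zify.
Import Order.TTheory GRing.Theory Num.Theory.
Set Implicit Arguments. Unset Strict Implicit. Unset Printing Implicit Defensive.

Section Gen.
Variables (n m : nat) (p : 'I_n -> nat).

Definition ltO := fun x y : 'I_n => x < y.

Lemma ltO_trans : transitive ltO.
Proof. by move=> x y z; apply: ltn_trans. Qed.

Lemma sorted_enum_set (A : {set 'I_n}) : sorted ltO (enum A).
Proof.
have -> : enum A = filter (mem A) (enum 'I_n) by rewrite enumT.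
apply: sorted_filter; first exact: ltO_trans.
by have := iota_ltn_sorted 0 n; rewrite -val_enum_ord sorted_map.
Qed.

Lemma Pseq_cat u v : Pseq p (u ++ v) = Pseq p u + Pseq p v.
Proof. by rewrite /Pseq big_cat. Qed.

Lemma Pseq_take k s : Pseq p (take k s) <= Pseq p s.
Proof. by rewrite -{2}(cat_take_drop k s) Pseq_cat leq_addr. Qed.

Lemma Pseq_filterC (P : pred 'I_n) s :
  Pseq p s = Pseq p (filter P s) + Pseq p (filter (predC P) s).
Proof. by rewrite /Pseq !big_filter (bigID P). Qed.

Lemma Pseq_filter_le (P : pred 'I_n) s : Pseq p (filter P s) <= Pseq p s.
Proof. by rewrite (Pseq_filterC P s) leq_addr. Qed.

Lemma sum_sub (P Q : pred 'I_n) : (forall x, P x -> Q x) ->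
  \sum_(x | P x) p x <= \sum_(x | Q x) p x.
Proof.
move=> PQ; rewrite [X in _ <= X](bigID P) /=.
rewrite (eq_bigl P); first exact: leq_addr.
by move=> x; case Px: (P x); rewrite ?andbT ?andbF ?PQ.
Qed.

Lemma Pseq_le_Pset s (X : {set 'I_n}) : uniq s -> (forall x, x \in s -> x \in X) ->
  Pseq p s <= Pset p X.
Proof. by move=> us sX; rewrite /Pseq /Pset big_uniq //; apply: sum_sub. Qed.

Lemma Pset_sub (X Y : {set 'I_n}) : (forall x, x \in X -> x \in Y) -> Pset p X <= Pset p Y.
Proof. by move=> XY; apply: sum_sub. Qed.

Lemma Pseq_filter_set s (X : {set 'I_n}) : uniq s -> (forall x, x \in X -> x \in s) ->
  Pseq p (filter (mem X) s) = Pset p X.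
Proof.
move=> us Xs; rewrite /Pseq /Pset big_uniq ?filter_uniq //.
apply: eq_bigl => x; rewrite mem_filter /=.
by case xX: (x \in X) => //=; rewrite Xs.
Qed.

Lemma p_le_pmax j : p j <= pmax p.
Proof. by rewrite /pmax; apply: (@leq_bigmax_cond _ xpredT (fun j => p j) j). Qed.

Lemma Pseq_le_size s : Pseq p s <= size s * pmax p.
Proof.
elim: s => [|x s IH]; first by rewrite /Pseq big_nil.
by rewrite /Pseq big_cons /= mulSn leq_add // p_le_pmax.
Qed.

Lemma take_index_in (u v : seq 'I_n) j : j \in u ->
  take (index j (u ++ v)).+1 (u ++ v) = take (index j u).+1 u.
Proof.
move=> ju; rewrite index_cat ju take_cat.
have : index j u < size u by rewrite index_mem.
rewrite leq_eqVlt => /orP[/eqP E|->] //.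
by rewrite E ltnn subnn take0 cats0 take_oversize // E.
Qed.

Lemma take_index_notin (u v : seq 'I_n) j : j \notin u ->
  take (index j (u ++ v)).+1 (u ++ v) = u ++ take (index j v).+1 v.
Proof.
move=> ju; rewrite index_cat (negbTE ju) take_cat.
by rewrite ltnNge leqW ?leq_addr //=; congr (_ ++ take _ _); lia.
Qed.

Lemma Pseq_take_index_in (u v : seq 'I_n) j : j \in u ->
  Pseq p (take (index j (u ++ v)).+1 (u ++ v)) <= Pseq p u.
Proof. by move=> ju; rewrite take_index_in // Pseq_take. Qed.

Lemma take_index_sorted s j : sorted ltO s -> j \in s ->
  take (index j s).+1 s = filter (fun x : 'I_n => x <= j) s.
Proof.
elim: s => [|x s IH] //= srt.
have /allP allx := order_path_min ltO_trans srt.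
have srt' := path_sorted srt.
rewrite in_cons eq_sym; case: (eqVneq x j) => [E _|nx /= js].
  subst x; rewrite leqnn /=; congr (_ :: _); rewrite take0 -(filter_pred0 s).
  apply: eq_in_filter => y ys /=.
  by have := allx y ys; rewrite /ltO ltnNge => /negbTE ->.
rewrite IH //.
by have := allx j js; rewrite /ltO => /ltnW ->.
Qed.

Lemma sorted_take_drop s k x y : sorted ltO s -> x \in take k s -> y \in drop k s -> x < y.
Proof.
move=> srt xt yd.
move: srt; rewrite -(cat_take_drop k s) (sorted_pairwise ltO_trans) pairwise_cat.
by case/and3P => /allrelP H _ _; apply: H.
Qed.

Lemma seqmax_le (B : int) x s : (forall y, y \in x :: s -> (y <= B)%R) ->
  (seqmax (x :: s) <= B)%R.
Proof.
rewrite /=; elim: s x => [|z s IH] x H /=; first by apply: H; rewrite mem_head.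
apply: IH => y; rewrite in_cons => /orP[/eqP ->|ys].
  by rewrite ge_max !H // !in_cons eqxx ?orbT.
by apply: H; rewrite !in_cons ys !orbT.
Qed.

Lemma seqmax_ge y s : y \in s -> (y <= seqmax s)%R.
Proof.
case: s => [|x s] //=.
elim: s x => [|z s IH] x /=; first by rewrite in_cons => /orP[/eqP ->|] //.
have H : forall (w : int) (t : seq int), (w <= foldl Num.max w t)%R.
  move=> w t; elim: t w => [|t0 t IHt] w //=.
  by apply: le_trans (IHt _); rewrite le_max lexx.
rewrite !in_cons => /orP[/eqP ->|/orP[/eqP ->|ys]].
- by apply: le_trans (H _ _); rewrite le_max lexx.
- by apply: le_trans (H _ _); rewrite le_max lexx orbT.
- by apply: IH; rewrite in_cons ys orbT.
Qed.

Lemma ctime_single (s : 'I_m -> seq 'I_n) j k0 : j \in s k0 ->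
  (forall k, k != k0 -> j \notin s k) ->
  ctime p s j = Pseq p (take (index j (s k0)).+1 (s k0)).
Proof.
move=> jk0 others; rewrite /ctime (bigD1 k0) //= big1 ?addn0 //.
by move=> k /andP[jk nk]; move: (others k nk); rewrite jk.
Qed.

Lemma ctime_proper (a : 'I_n -> 'I_m) j :
  ctime p (proper_seq a) j = Pset p (Jij a (a j) j).
Proof.
rewrite (@ctime_single _ j (a j)); last 2 first.
- by rewrite /proper_seq mem_enum inE.
- by move=> k nk; rewrite /proper_seq mem_enum inE eq_sym.
rewrite take_index_sorted ?sorted_enum_set ?mem_enum ?inE //.
rewrite /Pseq /Pset big_filter big_enum_cond /=.
by apply: eq_bigl => x; rewrite !inE.
Qed.

End Gen.

Section Main.
Variables (n m : nat) (p : 'I_n -> nat) (d : 'I_n -> int) (a : 'I_n -> 'I_m)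
  (js : 'I_n) (h i : 'I_m) (H' I' : {set 'I_n}).
Hypotheses (p_pos : forall j, 0 < p j)
    (d_sorted : forall j k : 'I_n, j <= k -> (d j <= d k)%R)
    (adm : admissible p a js h i)
    (sub_H : H' \subset [set x in JH p a js h])
    (sub_I : I' \subset [set x in JI p a js i])
    (eqPP : Pset p H' = Pset p I').

Local Notation pm := (pmax p).
Local Notation jH := (JH p a js h).
Local Notation jI := (JI p a js i).
Local Notation S := (intermediate p a js h i H' I').

Local Notation sh := (proper_seq a h).
Local Notation si := (proper_seq a i).
Local Notation Ah := [seq j : 'I_n <- sh | (j <= js) && (j \notin jH)].
Local Notation Bh := [seq j : 'I_n <- jH | j \notin H'].
Local Notation Ch := [seq j : 'I_n <- jI | j \in I'].
Local Notation Dh := [seq j : 'I_n <- sh | js < j].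
Local Notation Ai := [seq j : 'I_n <- si | j <= js].
Local Notation Bi := [seq j : 'I_n <- jH | j \in H'].
Local Notation Ci := [seq j : 'I_n <- jI | j \notin I'].
Local Notation Di := [seq j : 'I_n <- si | (js < j) && (j \notin jI)].

Lemma adm_ah : a js = h. Proof. by case: adm. Qed.

Lemma delta_nat : Pset p (Jij a i js) + 4 * (pm * pm) <= Pset p (Jij a h js).
Proof.
rewrite mulnn addnC; case: adm => _ _.
by rewrite /Delta lerBrDr -PoszD lez_nat.
Qed.

Lemma pm_pos : 0 < pm.
Proof. exact: leq_trans (p_pos js) (p_le_pmax p js). Qed.

Lemma hi : h != i.
Proof.
apply/eqP => E; have := delta_nat; rewrite E.
have := pm_pos; move: (Pset p _) => x; nia.
Qed.

Lemma ih : (i == h) = false.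
Proof. by rewrite eq_sym (negbTE hi). Qed.

Lemma mem_sh k x : (x \in proper_seq a k) = (a x == k).
Proof. by rewrite mem_enum inE. Qed.

Lemma jH_prop x : x \in jH -> (a x == h) && (x <= js).
Proof. by rewrite /JH /= => /mem_drop; rewrite mem_enum inE. Qed.

Lemma jI_prop x : x \in jI -> (a x == i) && (js < x).
Proof. by rewrite /JI => /mem_take; rewrite mem_enum inE. Qed.

Lemma H'_jH x : x \in H' -> x \in jH.
Proof. by move=> /(subsetP sub_H); rewrite inE. Qed.

Lemma I'_jI x : x \in I' -> x \in jI.
Proof. by move=> /(subsetP sub_I); rewrite inE. Qed.

Lemma H'_a x : x \in H' -> a x = h.
Proof. by move=> /H'_jH /jH_prop /andP[/eqP]. Qed.

Lemma I'_a x : x \in I' -> a x = i.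
Proof. by move=> /I'_jI /jI_prop /andP[/eqP]. Qed.

Lemma uniq_jH : uniq jH.
Proof. by rewrite /JH drop_uniq ?enum_uniq. Qed.

Lemma uniq_jI : uniq jI.
Proof. by rewrite /JI take_uniq ?enum_uniq. Qed.

Lemma sorted_jH : sorted (@ltO n) jH.
Proof. apply: (subseq_sorted (@ltO_trans n) (drop_subseq _ _)); exact: sorted_enum_set. Qed.

Lemma sorted_jI : sorted (@ltO n) jI.
Proof. apply: (subseq_sorted (@ltO_trans n) (take_subseq _ _)); exact: sorted_enum_set. Qed.

Lemma sorted_sh k : sorted (@ltO n) (proper_seq a k).
Proof. exact: sorted_enum_set. Qed.

Lemma Pseq_jH : Pseq p jH <= 2 * (pm * pm).
Proof.
apply: leq_trans (Pseq_le_size _ _) _; rewrite mulnA leq_mul2r.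
by rewrite /JH /= size_drop; apply/orP; right; lia.
Qed.

Lemma Pseq_jI : Pseq p jI <= 2 * (pm * pm).
Proof.
apply: leq_trans (Pseq_le_size _ _) _; rewrite mulnA leq_mul2r.
by rewrite /JI size_take; apply/orP; right; case: ifP => // /negbT; lia.
Qed.

Lemma split_jH x y : a x = h -> x <= js -> x \notin jH -> y \in jH -> x < y.
Proof.
move=> ax xj xn yj.
set s := enum (Jij a h js).
apply: (@sorted_take_drop _ s (size s - 2 * pm)); first exact: sorted_enum_set.
  have : x \in s by rewrite mem_enum inE ax eqxx xj.
  by rewrite -{1}(cat_take_drop (size s - 2 * pm) s) mem_cat (negbTE xn) orbF.
exact: yj.
Qed.

Lemma split_jI x y : x \in jI -> a y = i -> js < y -> y \notin jI -> x < y.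
Proof.
move=> xj ay jy yn.
set s := enum (Jafter a i js).
apply: (@sorted_take_drop _ s (2 * pm)); first exact: sorted_enum_set.
  exact: xj.
have : y \in s by rewrite mem_enum inE ay eqxx jy.
by rewrite -{1}(cat_take_drop (2 * pm) s) mem_cat (negbTE yn).
Qed.

Lemma Pseq_filter_in s (X : {set 'I_n}) : uniq s -> (forall x, x \in X -> x \in s) ->
  Pseq p [seq x <- s | x \in X] = Pset p X.
Proof. exact: Pseq_filter_set. Qed.

Lemma Pseq_split s (X : {set 'I_n}) :
  Pseq p [seq x <- s | x \notin X] + Pseq p [seq x <- s | x \in X] = Pseq p s.
Proof. by rewrite /Pseq !big_filter [in RHS](bigID (fun x => x \in X)) addnC. Qed.

Lemma sumBh : Pseq p [seq x <- jH | x \notin H'] + Pset p H' = Pseq p jH.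
Proof. by rewrite -(Pseq_filter_in uniq_jH H'_jH) Pseq_split. Qed.

Lemma sumCi : Pseq p [seq x <- jI | x \notin I'] + Pset p I' = Pseq p jI.
Proof. by rewrite -(Pseq_filter_in uniq_jI I'_jI) Pseq_split. Qed.

Lemma PH'_le : Pset p H' <= Pseq p jH.
Proof. by rewrite -(Pseq_filter_in uniq_jH H'_jH) Pseq_filter_le. Qed.

Lemma Jh_split j : j \in jH -> Pset p (Jij a h js) <= Pset p (Jij a h j) + Pseq p jH.
Proof.
move=> jj; rewrite /Pset (bigID (fun x : 'I_n => x <= j)) /=; apply: leq_add.
  by apply: sum_sub => x; rewrite !inE => /andP[/andP[-> _] ->].
rewrite /Pseq big_uniq ?uniq_jH //; apply: sum_sub => x.
rewrite !inE -ltnNge => /andP[/andP[/eqP ax xj] jx].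
apply/negPn/negP => xn.
by have := split_jH ax xj xn jj; rewrite ltnNge (ltnW jx).
Qed.

Lemma Sh_eq : S h = Ah ++ Bh ++ Ch ++ Dh.
Proof. by rewrite /intermediate eqxx. Qed.

Lemma Si_eq : S i = Ai ++ Bi ++ Ci ++ Di.
Proof. by rewrite /intermediate ih eqxx. Qed.

Lemma memSh x : (x \in S h) = ((a x == h) && (x \notin H')) || (x \in I').
Proof.
rewrite Sh_eq !mem_cat !(mem_filter _ x (proper_seq _ _)) !(mem_filter _ x jH) !(mem_filter _ x jI) !mem_sh.
case xI: (x \in I').
  by rewrite (I'_jI xI) !orbT.
case xH: (x \in jH).
  have /andP[/eqP ax xj] := jH_prop xH.
  by rewrite ax eqxx ltnNge xj /= andbT.
have xH' : (x \in H') = false by apply/negP => /H'_jH; rewrite xH.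
by rewrite xH'; case: (a x == h); case: (leqP x js).
Qed.

Lemma memSi x : (x \in S i) = ((a x == i) && (x \notin I')) || (x \in H').
Proof.
rewrite Si_eq !mem_cat !(mem_filter _ x (proper_seq _ _)) !(mem_filter _ x jH) !(mem_filter _ x jI) !mem_sh.
case xH: (x \in H').
  by rewrite (H'_jH xH) !orbT.
case xI: (x \in jI).
  have /andP[/eqP ax xj] := jI_prop xI.
  by rewrite ax eqxx leqNgt xj /=; case: (x \in I').
have xI' : (x \in I') = false by apply/negP => /I'_jI; rewrite xI.
by rewrite xI'; case: (a x == i); case: (leqP x js).
Qed.

Lemma notS_other k x : k != h -> k != i -> (x \in S k) = (a x == k).
Proof. by move=> kh ki; rewrite /intermediate (negbTE kh) (negbTE ki) mem_sh. Qed.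

Lemma ctimeS_h j : j \in S h -> j \notin S i ->
  ctime p S j = Pseq p (take (index j (S h)).+1 (S h)).
Proof.
move=> jh ji; apply: ctime_single => // k nk.
case: (eqVneq k i) => [->//|ki].
rewrite notS_other //; move: jh; rewrite memSh => /orP[/andP[/eqP -> _]|/I'_a ->].
  by rewrite eq_sym.
by rewrite eq_sym.
Qed.

Lemma ctimeS_i j : j \in S i -> j \notin S h ->
  ctime p S j = Pseq p (take (index j (S i)).+1 (S i)).
Proof.
move=> ji jh; apply: ctime_single => // k nk.
case: (eqVneq k h) => [->//|kh].
rewrite notS_other //; move: ji; rewrite memSi => /orP[/andP[/eqP -> _]|/H'_a ->].
  by rewrite eq_sym.
by rewrite eq_sym.
Qed.

Lemma ctimeS_other j : a j != h -> a j != i ->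
  ctime p S j = ctime p (proper_seq a) j.
Proof.
move=> jh ji.
have jnI : j \notin I' by apply/negP => /I'_a E; rewrite E eqxx in ji.
have jnH : j \notin H' by apply/negP => /H'_a E; rewrite E eqxx in jh.
rewrite (@ctime_single _ _ _ _ j (a j)); last 2 first.
- by rewrite notS_other // eqxx.
- move=> k nk; case: (eqVneq k h) => [->|kh].
    by rewrite memSh (negbTE jh) (negbTE jnI).
  case: (eqVneq k i) => [->|ki].
    by rewrite memSi (negbTE ji) (negbTE jnH).
  by rewrite notS_other // eq_sym.
rewrite [RHS](@ctime_single _ _ _ _ j (a j)); last 2 first.
- by rewrite mem_sh.
- by move=> k nk; rewrite mem_sh eq_sym.
by rewrite /intermediate (negbTE jh) (negbTE ji).
Qed.

Lemma uniq_Ah : uniq Ah.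
Proof. by rewrite filter_uniq ?enum_uniq. Qed.

Lemma uniq_AhjH : uniq (Ah ++ jH).
Proof.
rewrite cat_uniq uniq_Ah uniq_jH andbT /=.
by apply/hasPn => x xj; rewrite mem_filter xj andbF.
Qed.

Lemma AhjH_le : Pseq p Ah + Pseq p jH <= Pset p (Jij a h js).
Proof.
rewrite -Pseq_cat; apply: Pseq_le_Pset; first exact: uniq_AhjH.
move=> x; rewrite mem_cat mem_filter mem_sh inE => /orP[/andP[/andP[-> _] ->]//|].
by move/jH_prop.
Qed.

Lemma sumAhBhCh : Pseq p (Ah ++ Bh ++ Ch) = Pseq p Ah + Pseq p jH.
Proof.
by rewrite !Pseq_cat (Pseq_filter_in uniq_jI I'_jI) -eqPP sumBh.
Qed.

Lemma uniq_fs k (P : pred 'I_n) : uniq [seq y <- proper_seq a k | P y].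
Proof. by apply: filter_uniq; exact: enum_uniq. Qed.

Lemma memF k x (P : pred 'I_n) : (x \in [seq y <- proper_seq a k | P y]) = P x && (a x == k).
Proof. by rewrite mem_filter mem_sh. Qed.

Lemma key j : exists k, ctime p S j <= ctime p (proper_seq a) k /\ (d k <= d j)%R.
Proof.
case jH': (j \in H').
  have jjH := H'_jH jH'; have /andP[/eqP ajh jle] := jH_prop jjH.
  have jnI : j \notin I' by apply/negP => /I'_a; rewrite ajh => E; move: hi; rewrite E eqxx.
  exists j; split => //.
  have jSi : j \in S i by rewrite memSi jH' orbT.
  have jSh : j \notin S h by rewrite memSh jH' (negbTE jnI) andbF.
  rewrite ctimeS_i // Si_eq catA.
  have jm : j \in Ai ++ Bi by rewrite mem_cat (mem_filter _ j jH) jH' jjH orbT.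
  apply: leq_trans (Pseq_take_index_in p _ jm) _.
  rewrite Pseq_cat (Pseq_filter_in uniq_jH H'_jH) ctime_proper ajh.
  have A1 : Pseq p Ai <= Pset p (Jij a i js).
    apply: Pseq_le_Pset; first by rewrite uniq_fs.
    by move=> x; rewrite ?(memF, mem_filter) ?mem_sh inE andbC.
  have := Jh_split jjH; have := delta_nat; have := PH'_le; have := Pseq_jH.
  move: A1; move: (pm * pm) => q; lia.
case jI': (j \in I').
  have jjI := I'_jI jI'; have /andP[/eqP aji jlt] := jI_prop jjI.
  have jnH : j \notin H' by rewrite jH'.
  exists js; split; last by apply: d_sorted; apply: ltnW.
  have jSh : j \in S h by rewrite memSh jI' orbT.
  have jSi : j \notin S i by rewrite memSi jI' andbF jH'.
  rewrite ctimeS_h // Sh_eq catA catA.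
  have jm : j \in (Ah ++ Bh) ++ Ch by rewrite mem_cat (mem_filter _ j jI) jI' jjI orbT.
  apply: leq_trans (Pseq_take_index_in p _ jm) _.
  rewrite -catA sumAhBhCh ctime_proper adm_ah; exact: AhjH_le.
case: (eqVneq (a j) h) => [ajh|ajh].
  have jnI : j \notin I' by rewrite jI'.
  have jnH : j \notin H' by rewrite jH'.
  have jSh : j \in S h by rewrite memSh ajh eqxx jnH.
  have jSi : j \notin S i by rewrite memSi ajh (negbTE hi) jH'.
  exists j; split => //.
  rewrite ctimeS_h // Sh_eq ctime_proper ajh.
  case jjH: (j \in jH).
    have jnA : j \notin Ah by rewrite ?(memF, mem_filter) jjH andbF.
    rewrite take_index_notin // take_index_in; last by rewrite ?(memF, mem_filter) jjH jnH.
    have srtB : sorted (@ltO n) Bh := sorted_filter (@ltO_trans n) _ sorted_jH.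
    rewrite take_index_sorted //; last by rewrite ?(memF, mem_filter) jjH jnH.
    apply: Pseq_le_Pset.
      rewrite cat_uniq uniq_Ah !filter_uniq ?uniq_jH //= andbT.
      by apply/hasPn => x; rewrite ?(memF, mem_filter) => /andP[_ /andP[_ ->]]; rewrite andbF.
    move=> x; rewrite mem_cat ?(memF, mem_filter) ?mem_sh inE.
    case/orP => [/andP[/andP[xj xn] /eqP ax]|/andP[-> /andP[_ /jH_prop /andP[-> _]]]] //.
    by rewrite ax eqxx /= ltnW // (split_jH ax xj xn jjH).
  case: (leqP j js) => jle.
    have jA : j \in Ah by rewrite ?(memF, mem_filter) jle jjH ?mem_sh ajh eqxx.
    rewrite take_index_in //.
    have srtA : sorted (@ltO n) Ah := sorted_filter (@ltO_trans n) _ (sorted_sh h).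
    rewrite take_index_sorted //.
    apply: Pseq_le_Pset; first by apply: filter_uniq; exact: uniq_Ah.
    by move=> x; rewrite ?(memF, mem_filter) ?mem_sh inE => /andP[-> /andP[_ ->]].
  have jnABC : j \notin Ah ++ Bh ++ Ch.
    rewrite !mem_cat ?(memF, mem_filter) leqNgt jle /= negb_or; apply/andP; split.
      by apply/negP => /andP[_ /jH_prop /andP[_]]; rewrite leqNgt jle.
    by apply/negP => /andP[_ /jI_prop /andP[/eqP]]; rewrite ajh => E; move: hi; rewrite E eqxx.
  rewrite catA catA -(catA Ah) take_index_notin //.
  have srtD : sorted (@ltO n) Dh := sorted_filter (@ltO_trans n) _ (sorted_sh h).
  rewrite take_index_sorted; last 2 first.
  - exact: srtD.
  - by rewrite ?(memF, mem_filter) jle ?mem_sh ajh eqxx.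
  rewrite Pseq_cat sumAhBhCh -!Pseq_cat.
  apply: Pseq_le_Pset.
    rewrite cat_uniq uniq_AhjH filter_uniq ?uniq_fs //= andbT.
    apply/hasPn => x; rewrite ?(memF, mem_filter) => /andP[xj /andP[jsx _]].
    rewrite mem_cat ?(memF, mem_filter) negb_or; apply/andP; split.
      by rewrite leqNgt jsx.
    by apply/negP => /jH_prop /andP[_]; rewrite leqNgt jsx.
  move=> x; rewrite !mem_cat ?(memF, mem_filter) ?mem_sh inE.
  case/orP => [/orP[/andP[/andP[xj _] /eqP ax]|/jH_prop /andP[/eqP ax xj]]|/andP[-> /andP[_ ->]]] //.
  - by rewrite ax eqxx /= (leq_trans xj (ltnW jle)).
  - by rewrite ax eqxx /= (leq_trans xj (ltnW jle)).
case: (eqVneq (a j) i) => [aji|aji]; last first.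
  by exists j; split => //; rewrite ctimeS_other.
have jnI : j \notin I' by rewrite jI'.
have jnH : j \notin H' by rewrite jH'.
have jSi : j \in S i by rewrite memSi aji eqxx jnI.
have jSh : j \notin S h by rewrite memSh aji ih jI'.
rewrite ctimeS_i // Si_eq.
have srtAi : sorted (@ltO n) Ai := sorted_filter (@ltO_trans n) _ (sorted_sh i).
case: (leqP j js) => jle.
  exists j; split => //.
  have jA : j \in Ai by rewrite ?(memF, mem_filter) jle ?mem_sh aji eqxx.
  rewrite take_index_in // take_index_sorted // ctime_proper aji.
  apply: Pseq_le_Pset; first by rewrite filter_uniq ?uniq_fs.
  by move=> x; rewrite ?(memF, mem_filter) ?mem_sh inE => /andP[-> /andP[_ ->]].
have jnA : j \notin Ai by rewrite ?(memF, mem_filter) leqNgt jle.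
have jnB : j \notin Bi by rewrite ?(memF, mem_filter) jH'.
have A1 : Pseq p Ai <= Pset p (Jij a i js).
  apply: Pseq_le_Pset; first by rewrite uniq_fs.
  by move=> x; rewrite ?(memF, mem_filter) ?mem_sh inE andbC.
case jjI: (j \in jI).
  exists js; split; last by apply: d_sorted; apply: ltnW.
  rewrite catA catA.
  have jm : j \in (Ai ++ Bi) ++ Ci by rewrite mem_cat (mem_filter _ j jI) jjI jnI orbT.
  apply: leq_trans (Pseq_take_index_in p _ jm) _.
  rewrite !Pseq_cat (Pseq_filter_in uniq_jH H'_jH) ctime_proper adm_ah.
  have := Pseq_filter_le p (fun x => x \notin I') jI.
  have := delta_nat; have := PH'_le; have := Pseq_jH; have := Pseq_jI.
  move: A1; move: (pm * pm) => q; lia.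
exists j; split => //.
have jnC : j \notin Ci by rewrite ?(memF, mem_filter) jjI andbF.
have jnABC : j \notin Ai ++ Bi ++ Ci by rewrite !mem_cat negb_or jnA negb_or jnB jnC.
rewrite catA catA -(catA Ai) take_index_notin //.
have srtD : sorted (@ltO n) Di := sorted_filter (@ltO_trans n) _ (sorted_sh i).
rewrite take_index_sorted; last 2 first.
- exact: srtD.
- by rewrite ?(memF, mem_filter) jle jjI ?mem_sh aji eqxx.
have E : Pseq p (Ai ++ Bi ++ Ci) = Pseq p (Ai ++ jI).
  rewrite !Pseq_cat (Pseq_filter_in uniq_jH H'_jH) eqPP; congr (_ + _); by rewrite addnC sumCi.
rewrite Pseq_cat E -Pseq_cat -catA ctime_proper aji.
apply: Pseq_le_Pset.
  rewrite cat_uniq uniq_fs /= cat_uniq uniq_jI filter_uniq ?uniq_fs //=.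
  rewrite andbT; apply/andP; split.
    apply/hasPn => x; rewrite mem_cat => /orP[/jI_prop /andP[_ jx]|].
      by rewrite ?(memF, mem_filter) leqNgt jx.
    by rewrite ?(memF, mem_filter) => /andP[_ /andP[/andP[jx _] _]]; rewrite leqNgt jx.
  by apply/hasPn => x; rewrite ?(memF, mem_filter) => /andP[_ /andP[/andP[_ ->] _]].
move=> x; rewrite !mem_cat ?(memF, mem_filter) ?mem_sh inE.
case/or3P => [/andP[xj /eqP ax]|xI|/andP[-> /andP[_ ->]]] //.
- by rewrite ax eqxx /= (leq_trans xj (ltnW jle)).
- have /andP[/eqP ax _] := jI_prop xI.
  by rewrite ax eqxx /= ltnW // (split_jI xI aji jle (negbT jjI)).
Qed.

End Main.

Theorem lemma7 (n m : nat) (p : 'I_n -> nat) (d : 'I_n -> int)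
    (p_pos : forall j, 0 < p j)
    (d_sorted : forall j k : 'I_n, j <= k -> (d j <= d k)%R)
    (a : 'I_n -> 'I_m) (js : 'I_n) (h i : 'I_m)
    (adm : admissible p a js h i)
    (H' I' : {set 'I_n})
    (sub_H : H' \subset [set x in JH p a js h])
    (sub_I : I' \subset [set x in JI p a js i])
    (ne_H : H' != set0) (ne_I : I' != set0)
    (eqP : Pset p H' = Pset p I') :
  (Lmax p d (intermediate p a js h i H' I') <= Lmax p d (proper_seq a))%R.
Proof.
have K := key p_pos d_sorted adm sub_H sub_I eqP.
set B := Lmax p d (proper_seq a).
have HB : forall y, y \in [seq ((ctime p (intermediate p a js h i H' I') j)%:Z - d j)%R
                         | j <- enum 'I_n] -> (y <= B)%R.
  move=> y /mapP[j _ ->].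
  have [k [Hk Hd]] := K j.
  apply: (@le_trans _ _ ((ctime p (proper_seq a) k)%:Z - d k)%R).
    by apply: lerB => //; rewrite lez_nat.
  by apply: seqmax_ge; apply/mapP; exists k; rewrite ?mem_enum.
rewrite /Lmax; move: HB.
have : js \in enum 'I_n by rewrite mem_enum.
case: (enum 'I_n) => [|j0 e] //= _ HB.
exact: seqmax_le.
Qed.
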